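(* Let $\mathcal{A}=\{1,\dots,K\}$ with $K\ge2$, $a^*\in\mathcal{A}$, $\sigma>0$, $\delta>0$, and for each $a\in\mathcal{A}$ let $m_a\ge1$ and $\vec{y}_a\in\mathbb{R}^{m_a}$. For $\{\vec{\epsilon}_a\}_{a\in\mathcal{A}}$ with $\vec{\epsilon}_a\in\mathbb{R}^{m_a}$ let $\tilde{\mu}_a=(\vec{y}_a+\vec{\epsilon}_a)^T\mathbf{1}/m_a$. Then the set of all $\{\vec{\epsilon}_a\}_{a\in\mathcal{A}}$ satisfying $$\sum_{a\neq a^*}\Phi\!\left(\frac{\tilde{\mu}_a-\tilde{\mu}_{a^*}}{\sigma^3\sqrt{1/m_a+1/m_{a^*}}}\right)\le\delta\quad\text{and}\quad \tilde{\mu}_a-\tilde{\mu}_{a^*}\le0\ \ \forall a\neq a^*$$ is convex.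
   Context: $\Phi$ denotes the standard normal cumulative distribution function and $\mathbf{1}$ the all-ones vector. Here $\vec{y}_a$ are the rewards collected from arm $a$ in an offline batch and $\vec{\epsilon}_a$ is the attacker's additive poisoning of them, so $\tilde{\mu}_a$ is the post-attack empirical mean. *)

(* Defs.v *)
From HB Require Import structures.
From mathcomp Require Import all_boot all_order all_algebra.
From mathcomp Require Import all_classical all_reals all_analysis.
Set Implicit Arguments. Unset Strict Implicit. Unset Printing Implicit Defensive.
Import Order.TTheory GRing.Theory Num.Theory.
Local Open Scope classical_set_scope.
Local Open Scope ring_scope.

Definition Phi {R : realType} (x : R) : R :=
  fine (normal_prob 0 1 `]-oo, x]).

Definition profile (R : realType) (K : nat) (m : 'I_K -> nat) :=
  forall a : 'I_K, 'rV[R]_(m a).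

Definition mu_tilde (R : realType) (K : nat) (m : 'I_K -> nat)
  (y eps : profile R m) (a : 'I_K) : R :=
  (\sum_(i < m a) (y a 0 i + eps a 0 i)) / (m a)%:R.

Definition comb (R : realType) (K : nat) (m : 'I_K -> nat)
  (t : R) (e1 e2 : profile R m) : profile R m :=
  fun a => t *: e1 a + (1 - t) *: e2 a.

Definition convex_profile_set (R : realType) (K : nat) (m : 'I_K -> nat)
  (S : profile R m -> Prop) : Prop :=
  forall (e1 e2 : profile R m) (t : R), S e1 -> S e2 -> 0 <= t -> t <= 1 ->
    S (comb t e1 e2).

Definition attack_set (R : realType) (K : nat) (m : 'I_K -> nat)
  (astar : 'I_K) (sigma delta : R) (y : profile R m) (eps : profile R m) : Prop :=
  (\sum_(a < K | a != astar)
      Phi ((mu_tilde y eps a - mu_tilde y eps astar) /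
           (sigma ^+ 3 * Num.sqrt ((m a)%:R^-1 + (m astar)%:R^-1))) <= delta)
  /\ (forall a : 'I_K, a != astar -> mu_tilde y eps a - mu_tilde y eps astar <= 0).

(* Main.v *)
Require Import Defs.
From HB Require Import structures.
From mathcomp Require Import all_boot all_order all_algebra.
From mathcomp Require Import all_classical all_reals all_analysis.
From mathcomp Require Import ring lra measurable_realfun.
Import Order.TTheory GRing.Theory Num.Theory.
Local Open Scope ring_scope.

Section S.
Local Open Scope classical_set_scope.
Variable R : realType.
Local Notation f := (@normal_pdf R 0 1).
Local Notation P := (@normal_prob R 0 1).

Lemma f_mono (x z : R) : x <= z -> z <= 0 -> f x <= f z.
Proof.
move=> xz z0; rewrite /normal_pdf oner_eq0.
apply: ler_wpM2l; first exact: normal_peak_ge0.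
rewrite /normal_fun ler_expR !subr0 ler_pM2r; last first.
  by rewrite invr_gt0 expr1n.
nra. Qed.

Lemma P_split (a b : R) : a <= b ->
  P `]-oo, b] = (P `]-oo, a] + P `]a, b])%E.
Proof.
move=> ab.
rewrite (@itv_bndbnd_setU _ _ _ (BRight a)) ?bnd_simp //.
rewrite measureU //=.
apply/seteqP; split => x //= []; rewrite !in_itv /= => xa /andP[ax _]; lra.
Qed.
Arguments P_split {a b}.

Lemma P_fin (x : R) : (P `]-oo, x] \is a fin_num)%E.
Proof.
rewrite ge0_fin_numE; last exact: measure_ge0.
apply: (le_lt_trans (probability_le1 _ _)) => //; exact: ltry.
Qed.

Lemma P_ub (a b : R) : a <= b -> b <= 0 -> (P `]a, b] <= ((b - a) * f b)%:E)%E.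
Proof.
move=> ab b0.
rewrite /normal_prob.
apply: (@le_trans _ _ (\int[lebesgue_measure]_(x in `]a, b]) (cst (f b)%:E) x)%E).
  apply: ge0_le_integral => //.
  - by move=> x _; rewrite lee_fin normal_pdf_ge0.
  - apply/measurable_EFinP; apply: measurable_funTS; exact: measurable_normal_pdf.
  - move=> x; rewrite /= in_itv /= => /andP[_ xb]; rewrite lee_fin; apply: f_mono => //.
rewrite integral_cst //.
have := @lebesgue_measure_itv R (`]a, b]%R); rewrite /= => ->.
case: ifP => _.
- by rewrite -EFinD -EFinM lee_fin mulrC.
- by rewrite mule0 lee_fin mulr_ge0 ?normal_pdf_ge0 ?subr_ge0.
Qed.
Arguments P_ub {a b}.

Lemma P_lb (a b : R) : a <= b -> b <= 0 -> (((b - a) * f a)%:E <= P `]a, b])%E.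
Proof.
move=> ab b0.
rewrite /normal_prob.
apply: (@le_trans _ _ (\int[lebesgue_measure]_(x in `]a, b]) (cst (f a)%:E) x)%E); last first.
  apply: ge0_le_integral => //.
  - by move=> x _; rewrite lee_fin normal_pdf_ge0.
  - apply/measurable_EFinP; apply: measurable_funTS; exact: measurable_normal_pdf.
  - move=> x; rewrite /= in_itv /= => /andP[ax xb]; rewrite lee_fin; apply: f_mono; lra.
rewrite integral_cst //.
have := @lebesgue_measure_itv R (`]a, b]%R); rewrite /= => ->.
case: ifP => h.
- by rewrite -EFinD -EFinM lee_fin mulrC.
- move/negbT: h; rewrite lte_fin -leNgt => ba.
  have -> : b = a by apply/eqP; rewrite eq_le ab ba.
  by rewrite mule0 subrr mul0r.
Qed.
Arguments P_lb {a b}.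

Lemma Phi_split (a b : R) : a <= b -> Phi b = Phi a + fine (P `]a, b]).
Proof.
move=> ab; rewrite /Phi (P_split ab) fineD //; first exact: P_fin.
rewrite ge0_fin_numE; last exact: measure_ge0.
apply: (le_lt_trans (probability_le1 _ _)) => //; exact: ltry.
Qed.
Arguments Phi_split {a b}.

Lemma Phi_ub (a b : R) : a <= b -> b <= 0 -> Phi b <= Phi a + (b - a) * f b.
Proof.
move=> ab b0; rewrite (Phi_split ab) lerD2l.
have := P_ub ab b0; have := P_lb ab b0.
case: (P `]a, b]) => //= r _; rewrite lee_fin //.
Qed.
Arguments Phi_ub {a b}.

Lemma Phi_lb (a b : R) : a <= b -> b <= 0 -> Phi a + (b - a) * f a <= Phi b.
Proof.
move=> ab b0; rewrite (Phi_split ab) lerD2l.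
have := P_ub ab b0; have := P_lb ab b0.
case: (P `]a, b]) => //= r; rewrite lee_fin //.
Qed.
Arguments Phi_lb {a b}.

Lemma Phi_convex_aux (x y t : R) : x <= y -> y <= 0 -> 0 <= t -> t <= 1 ->
  Phi (t * x + (1 - t) * y) <= t * Phi x + (1 - t) * Phi y.
Proof.
move=> xy y0 t0 t1.
set z := t * x + (1 - t) * y.
have xz : x <= z by rewrite /z; nra.
have zy : z <= y by rewrite /z; nra.
have h1 := Phi_ub xz (le_trans zy y0).
have h2 := Phi_lb zy y0.
have e1 : t * (z - x) = (1 - t) * (y - z) by rewrite /z; ring.
have fz0 : 0 <= f z by exact: normal_pdf_ge0.
nra.
Qed.
Arguments Phi_convex_aux {x y t}.

Lemma Phi_convex (x y t : R) : x <= 0 -> y <= 0 -> 0 <= t -> t <= 1 ->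
  Phi (t * x + (1 - t) * y) <= t * Phi x + (1 - t) * Phi y.
Proof.
move=> x0 y0 t0 t1.
have [xy|yx] := lerP x y; first exact: Phi_convex_aux.
have := @Phi_convex_aux y x (1 - t) (ltW yx) x0 ltac:(lra) ltac:(lra).
have -> : 1 - (1 - t) = t by ring.
by rewrite addrC [X in _ <= X]addrC.
Qed.
End S.

Theorem proposition2 (R : realType) (K : nat) (hK : (2 <= K)%N) (astar : 'I_K)
  (sigma delta : R) (hsigma : 0 < sigma) (hdelta : 0 < delta)
  (m : 'I_K -> nat) (hm : forall a, (1 <= m a)%N) (y : profile R m) :
  convex_profile_set (attack_set astar sigma delta y).
Proof.
move=> e1 e2 t [S1 D1] [S2 D2] t0 t1.
have mu_comb a : mu_tilde y (comb t e1 e2) a =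
    t * mu_tilde y e1 a + (1 - t) * mu_tilde y e2 a.
  rewrite /mu_tilde /comb !mulrA -!mulrDl; congr (_ / _).
  rewrite !mulr_sumr -big_split /=; apply: eq_bigr => i _; rewrite !mxE; ring.
have d_comb a : mu_tilde y (comb t e1 e2) a - mu_tilde y (comb t e1 e2) astar =
    t * (mu_tilde y e1 a - mu_tilde y e1 astar) +
    (1 - t) * (mu_tilde y e2 a - mu_tilde y e2 astar).
  by rewrite !mu_comb; ring.
split.
- set c := fun a : 'I_K => sigma ^+ 3 * Num.sqrt ((m a)%:R^-1 + (m astar)%:R^-1).
  have ci a : 0 <= (c a)^-1.
    by rewrite invr_ge0 mulr_ge0 ?sqrtr_ge0 // exprn_ge0 // ltW.
  apply: (@le_trans _ _ (\sum_(a < K | a != astar)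
     (t * Phi ((mu_tilde y e1 a - mu_tilde y e1 astar) / c a) +
      (1 - t) * Phi ((mu_tilde y e2 a - mu_tilde y e2 astar) / c a)))).
    apply: ler_sum => a Ha; have hl : forall u v w : R, (t * u + (1 - t) * v) / w = t * (u / w) + (1 - t) * (v / w).
      by move=> u v w; rewrite mulrDl -!mulrA.
    rewrite d_comb hl.
    apply: Phi_convex => //.
    + by apply: mulr_le0_ge0; [exact: (D1 a Ha) | exact: ci].
    + by apply: mulr_le0_ge0; [exact: (D2 a Ha) | exact: ci].
  rewrite big_split /= -!mulr_sumr.
  rewrite /c in S1 S2 *; nra.
- move=> a Ha; rewrite d_comb; have := D1 a Ha; have := D2 a Ha; nra.
Qed.
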